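(* Let $L,R$ be nonempty subsets of a group $G$ such that $\mathcal{W}(L)$ and $\mathcal{W}(R)$ are subgroups of $G$, let $s\in G$, and let $k_s$ be the minimum strong connection length in $\langle L\rangle s\langle R\rangle$. If $k_s$ is finite, the double coset $\langle L\rangle s\langle R\rangle$ is the union of exactly $k_s$ strongly connected components of $2\mathrm{S}(G;L,R)$, all of the same cardinality; if $k_s$ is infinite it is the union of infinitely many strongly connected components. Moreover, if $k_s$ is finite and $L\cap N_G(L)\neq\emptyset$ or $R\cap N_G(R)\neq\emptyset$, then all strongly connected components contained in $\langle L\rangle s\langle R\rangle$ are isomorphic as digraphs.
   Context: For nonempty subsets $L,R$ of a group $G$, the two-sided group digraph $2\mathrm{S}(G;L,R)$ has vertex set $G$ and a directed arc $(g,h)$ if and only if $h=l^{-1}gr$ for some $l\in L$, $r\in R$. For nonempty $S$, $\mathcal{W}(S)$ is the set of elements expressible as finite products $s_1\cdots s_n$, $n\ge1$, $s_i\in S$. $g$ is strongly connected to $h$ if there are directed paths from $g$ to $h$ and from $h$ to $g$. Assuming $\mathcal{W}(L),\mathcal{W}(R)$ are subgroups, the minimum strong connection length $k_s$ in $\langle L\rangle s\langle R\rangle$ is the minimum positive length of a word $w$ whose letters all lie in $L$ or all lie in $L^{-1}$ such that $ws$ is strongly connected to $s$ (equivalently, the minimum positive length of a word $w$ with letters all in $R$ or all in $R^{-1}$ such that $sw$ is strongly connected to $s$); it is infinite if no such word exists. $N_G(L)=\{g\in G:g^{-1}Lg=L\}$. *)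

(* Defs.v *)
(* G may be an infinite group, so we use an abstract group record. *)
From Stdlib Require Import Relations Arith.

Record group := Group {
  gcar :> Type;
  gmul : gcar -> gcar -> gcar;
  gone : gcar;
  ginv : gcar -> gcar;
  gmulA : forall x y z, gmul x (gmul y z) = gmul (gmul x y) z;
  gmul1 : forall x, gmul gone x = x;
  gmulV : forall x, gmul (ginv x) x = gone
}.

Arguments gmul {g}. Arguments gone {g}. Arguments ginv {g}.

Section Defs.
Variable G : group.
Implicit Types (L R S H : G -> Prop) (g h x y s : G).

Definition is_subgroup H : Prop :=
  H gone /\ (forall x y, H x -> H y -> H (gmul x y)) /\ (forall x, H x -> H (ginv x)).

Inductive Wd S : G -> Prop :=
  | Wd_one : forall s, S s -> Wd S s
  | Wd_cons : forall s x, S s -> Wd S x -> Wd S (gmul s x).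

Inductive gen S : G -> Prop :=
  | gen_1 : gen S gone
  | gen_mul : forall s x, S s -> gen S x -> gen S (gmul s x)
  | gen_mulV : forall s x, S s -> gen S x -> gen S (gmul (ginv s) x).

Definition arc L R g h : Prop :=
  exists l r, L l /\ R r /\ h = gmul (gmul (ginv l) g) r.

Definition reach L R : relation G := clos_refl_trans G (arc L R).

Definition strongly_connected L R g h : Prop := reach L R g h /\ reach L R h g.

Definition dcoset L R s x : Prop :=
  exists a b, gen L a /\ gen R b /\ x = gmul (gmul a s) b.

Inductive word_len (P : G -> Prop) : nat -> G -> Prop :=
  | wl_0 : word_len P 0 gone
  | wl_S : forall n p w, P p -> word_len P n w -> word_len P (Datatypes.S n) (gmul p w).

Definition invset (P : G -> Prop) : G -> Prop := fun y => P (ginv y).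

Definition conn_len L R s (n : nat) : Prop :=
  0 < n /\ exists w, (word_len L n w \/ word_len (invset L) n w) /\
                     strongly_connected L R (gmul w s) s.

Definition min_conn_len L R s (k : nat) : Prop :=
  conn_len L R s k /\ forall n, conn_len L R s n -> k <= n.

Definition conn_len_infinite L R s : Prop := forall n, ~ conn_len L R s n.

Definition normalizer (P : G -> Prop) (g : G) : Prop :=
  (forall p, P p -> P (gmul (gmul (ginv g) p) g)) /\
  (forall p, P p -> exists q, P q /\ p = gmul (gmul (ginv g) q) g).

Definition scc L R a : G -> Prop := fun x => strongly_connected L R a x.

Definition equipotent (A B : G -> Prop) : Prop :=
  exists (f : sig A -> sig B) (f' : sig B -> sig A),
    (forall u, f' (f u) = u) /\ (forall v, f (f' v) = v).

Definition digraph_iso L R (A B : G -> Prop) : Prop :=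
  exists (f : sig A -> sig B) (f' : sig B -> sig A),
    (forall u, f' (f u) = u) /\ (forall v, f (f' v) = v) /\
    (forall u v, arc L R (proj1_sig u) (proj1_sig v) <->
                 arc L R (proj1_sig (f u)) (proj1_sig (f v))).

End Defs.

(* Main.v *)
Require Import Defs.
From Stdlib Require Import Relations Arith Lia ProofIrrelevance.

Section Grp.
Variable G : group.
Local Infix "**" := (@gmul G) (at level 40, left associativity).
Local Notation "1" := (@gone G).
Local Notation inv := (@ginv G).

Lemma mulA (x y z : G) : x ** (y ** z) = x ** y ** z.
Proof. apply gmulA. Qed.
Lemma mul1l (x : G) : 1 ** x = x. Proof. apply gmul1. Qed.
Lemma mulVl (x : G) : inv x ** x = 1. Proof. apply gmulV. Qed.
Lemma mulK (x y : G) : inv x ** (x ** y) = y.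
Proof. rewrite mulA, mulVl, mul1l. reflexivity. Qed.
Lemma mulVr (x : G) : x ** inv x = 1.
Proof.
  rewrite <- (mulK (inv x) (x ** inv x)).
  rewrite (mulA (inv x) x (inv x)), mulVl, mul1l, mulVl. reflexivity.
Qed.
Lemma mul1r (x : G) : x ** 1 = x.
Proof. rewrite <- (mulVl x), mulA, mulVr, mul1l. reflexivity. Qed.
Lemma mulKV (x y : G) : x ** (inv x ** y) = y.
Proof. rewrite mulA, mulVr, mul1l. reflexivity. Qed.
Lemma mulKr (x y : G) : y ** x ** inv x = y.
Proof. rewrite <- mulA, mulVr, mul1r. reflexivity. Qed.
Lemma mulKVr (x y : G) : y ** inv x ** x = y.
Proof. rewrite <- mulA, mulVl, mul1r. reflexivity. Qed.
Lemma inv_uniq (x y : G) : x ** y = 1 -> y = inv x.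
Proof. intro H. rewrite <- (mulK x y), H, mul1r. reflexivity. Qed.
Lemma invK (x : G) : inv (inv x) = x.
Proof. symmetry. apply inv_uniq. apply mulVl. Qed.
Lemma invM (x y : G) : inv (x ** y) = inv y ** inv x.
Proof.
  symmetry. apply inv_uniq.
  rewrite <- mulA, (mulA y (inv y)), mulVr, mul1l, mulVr. reflexivity.
Qed.
Lemma inv1 : inv 1 = 1.
Proof. symmetry; apply inv_uniq, mul1l. Qed.

Ltac gsimpl := repeat (rewrite ?invM, ?invK, ?inv1; rewrite <- ?mulA;
  rewrite ?mulK, ?mulKV, ?mul1l, ?mul1r, ?mulVr, ?mulVl).

Variables (L R : G -> Prop) (s : G).
Hypothesis hWL : is_subgroup G (Wd G L).
Hypothesis hWR : is_subgroup G (Wd G R).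
Variables (l0 r0 : G).
Hypothesis Hl0 : L l0.
Hypothesis Hr0 : R r0.

Inductive pw : nat -> G -> G -> Prop :=
 | pw0 : pw 0 1 1
 | pwS : forall n l r u v, L l -> R r -> pw n u v -> pw (S n) (l ** u) (r ** v).

Definition good u v := exists n, pw n u v.
Definition rel x y := exists u v, good u v /\ y = inv u ** x ** v.

Lemma pw_cat n m u v u' v' : pw n u v -> pw m u' v' -> pw (n + m) (u ** u') (v ** v').
Proof.
  induction 1; intros Hh; simpl.
  - rewrite !mul1l; exact Hh.
  - rewrite <- !mulA. constructor; auto.
Qed.

Lemma wl_cat (P : G -> Prop) n m w w' : word_len G P n w -> word_len G P m w' ->
  word_len G P (n + m) (w ** w').
Proof.
  induction 1; intros Hh; simpl.
  - rewrite mul1l; exact Hh.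
  - rewrite <- mulA. constructor; auto.
Qed.

Lemma Wd_wl (P : G -> Prop) x : Wd G P x -> exists n, word_len G P (S n) x.
Proof.
  induction 1.
  - exists 0. rewrite <- (mul1r s0). constructor; [auto| constructor].
  - destruct IHWd as [n Hn]. exists (S n). constructor; auto.
Qed.

Lemma wl_pow (P : G -> Prop) n q : word_len G P n 1 -> word_len G P (n * q) 1.
Proof.
  intro H. induction q.
  - rewrite Nat.mul_0_r. constructor.
  - rewrite Nat.mul_succ_r, Nat.add_comm, <- (mul1l 1). apply wl_cat; auto.
Qed.

Lemma wl_pw n u v : word_len G L n u -> word_len G R n v -> pw n u v.
Proof.
  intro H; revert v; induction H; intros v' Hv; inversion Hv; subst.
  - constructor.
  - constructor; auto.
Qed.

Lemma good1 : good 1 1.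
Proof. exists 0; constructor. Qed.

Lemma good_mul u v u' v' : good u v -> good u' v' -> good (u ** u') (v ** v').
Proof. intros [n H] [m H']. exists (n + m). apply pw_cat; auto. Qed.

Lemma good_gen l r : L l -> R r -> good l r.
Proof. intros. exists (S O). rewrite <- (mul1r l), <- (mul1r r). constructor; auto; constructor. Qed.

Lemma good_gen_inv l r : L l -> R r -> good (inv l) (inv r).
Proof.
  intros Hl Hr.
  destruct hWL as [_ [_ HiL]]. destruct hWR as [_ [_ HiR]].
  destruct (Wd_wl _ _ (HiL _ (Wd_one G L l Hl))) as [p Hp].
  destruct (Wd_wl _ _ (HiR _ (Wd_one G R r Hr))) as [q Hq].
  assert (HL1 : word_len G L (S (S p)) 1).
  { rewrite <- (mulVr l). constructor; auto. }
  assert (HR1 : word_len G R (S (S q)) 1).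
  { rewrite <- (mulVr r). constructor; auto. }
  exists (S p + S (S p) * S q).
  apply wl_pw.
  - rewrite <- (mul1r (inv l)). apply wl_cat; auto. apply wl_pow; auto.
  - replace (S p + S (S p) * S q) with (S q + S (S q) * S p) by lia.
    rewrite <- (mul1r (inv r)). apply wl_cat; auto. apply wl_pow; auto.
Qed.

Lemma good_inv u v : good u v -> good (inv u) (inv v).
Proof.
  intros [n H]. induction H.
  - rewrite inv1. apply good1.
  - rewrite !invM. apply good_mul; auto. apply good_gen_inv; auto.
Qed.

Lemma good_conj a b u v : good a b -> good u v -> good (a ** u ** inv a) (b ** v ** inv b).
Proof. intros. apply good_mul; [apply good_mul|apply good_inv]; auto. Qed.

Lemma conj_gen c d : (forall l1 r1, L l1 -> R r1 -> good (c ** l1 ** inv c) (d ** r1 ** inv d)) ->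
  forall u v, good u v -> good (c ** u ** inv c) (d ** v ** inv d).
Proof.
  intros Hg u v [n H]. induction H.
  - rewrite mul1r, mulVr, mul1r, mulVr. apply good1.
  - replace (c ** (l ** u) ** inv c) with ((c ** l ** inv c) ** (c ** u ** inv c)) by (gsimpl; reflexivity).
    replace (d ** (r ** v) ** inv d) with ((d ** r ** inv d) ** (d ** v ** inv d)) by (gsimpl; reflexivity).
    apply good_mul; auto.
Qed.

Lemma rel_refl x : rel x x.
Proof. exists 1, 1. split; [apply good1|]. gsimpl; reflexivity. Qed.

Lemma rel_sym x y : rel x y -> rel y x.
Proof.
  intros [u [v [Hg ->]]]. exists (inv u), (inv v). split; [apply good_inv; auto|].
  gsimpl; reflexivity.
Qed.

Lemma rel_trans x y z : rel x y -> rel y z -> rel x z.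
Proof.
  intros [u [v [Hg ->]]] [u' [v' [Hg' ->]]]. exists (u ** u'), (v ** v').
  split; [apply good_mul; auto|]. gsimpl; reflexivity.
Qed.

Lemma arc_rel x y : arc G L R x y -> rel x y.
Proof. intros [l [r [Hl [Hr ->]]]]. exists l, r. split; [apply good_gen; auto|reflexivity]. Qed.

Lemma sc_rel x y : strongly_connected G L R x y <-> rel x y.
Proof.
  split.
  - intros [H _]. induction H.
    + apply arc_rel; auto.
    + apply rel_refl.
    + eapply rel_trans; eauto.
  - intros Hr. assert (Hreach : forall a b, rel a b -> reach G L R a b).
    { clear. intros a b [u [v [[n H] ->]]]. revert a. induction H; intros a.
      - gsimpl. apply rt_refl.
      - eapply rt_trans; [apply rt_step|].
        + exists l, r. split; [|split]; eauto.
        + replace (inv (l ** u) ** a ** (r ** v)) with (inv u ** (inv l ** a ** r) ** v)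
            by (gsimpl; reflexivity). apply IHpw. }
    split; apply Hreach; auto. apply rel_sym; auto.
Qed.

Lemma rel_conj c d x y : (forall u v, good u v -> good (c ** u ** inv c) (d ** v ** inv d)) ->
  rel x y -> rel (c ** x ** inv d) (c ** y ** inv d).
Proof.
  intros Hc [u [v [Hg ->]]]. exists (c ** u ** inv c), (d ** v ** inv d).
  split; auto. gsimpl; reflexivity.
Qed.

Lemma TL l x y : L l -> rel x y -> rel (l ** x) (l ** y).
Proof.
  intros Hl H. rewrite <- (mul1r (l ** x)), <- (mul1r (l ** y)), <- inv1.
  apply rel_conj; auto. apply conj_gen. intros l1 r1 H1 H2.
  replace (1 ** r1 ** inv 1) with (r1 ** r1 ** inv r1) by (gsimpl; reflexivity).
  apply good_conj; apply good_gen; auto.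
Qed.

Lemma TLi l x y : L l -> rel x y -> rel (inv l ** x) (inv l ** y).
Proof.
  intros Hl H. rewrite <- (mul1r (inv l ** x)), <- (mul1r (inv l ** y)), <- inv1.
  apply rel_conj; auto. apply conj_gen. intros l1 r1 H1 H2.
  replace (1 ** r1 ** inv 1) with (inv r1 ** r1 ** inv (inv r1)) by (gsimpl; reflexivity).
  apply good_conj; [apply good_gen_inv|apply good_gen]; auto.
Qed.

Lemma TR r x y : R r -> rel x y -> rel (x ** r) (y ** r).
Proof.
  intros Hr H. replace (x ** r) with (1 ** x ** inv (inv r)) by (gsimpl; reflexivity).
  replace (y ** r) with (1 ** y ** inv (inv r)) by (gsimpl; reflexivity).
  apply rel_conj; auto. apply conj_gen. intros l1 r1 H1 H2.
  replace (1 ** l1 ** inv 1) with (inv l1 ** l1 ** inv (inv l1)) by (gsimpl; reflexivity).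
  apply good_conj; [apply good_gen_inv|apply good_gen]; auto.
Qed.

Lemma TRi r x y : R r -> rel x y -> rel (x ** inv r) (y ** inv r).
Proof.
  intros Hr H. replace (x ** inv r) with (1 ** x ** inv r) by (gsimpl; reflexivity).
  replace (y ** inv r) with (1 ** y ** inv r) by (gsimpl; reflexivity).
  apply rel_conj; auto. apply conj_gen. intros l1 r1 H1 H2.
  replace (1 ** l1 ** inv 1) with (l1 ** l1 ** inv l1) by (gsimpl; reflexivity).
  apply good_conj; apply good_gen; auto.
Qed.

Lemma rel_LL l l' z : L l -> L l' -> rel (l ** z) (l' ** z).
Proof.
  intros. exists (l ** inv l'), (r0 ** inv r0). split.
  - apply good_mul; [apply good_gen|apply good_gen_inv]; auto.
  - gsimpl; reflexivity.
Qed.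

Lemma rel_LiLi l l' z : L l -> L l' -> rel (inv l ** z) (inv l' ** z).
Proof.
  intros. exists (inv l ** l'), (inv r0 ** r0). split.
  - apply good_mul; [apply good_gen_inv|apply good_gen]; auto.
  - gsimpl; reflexivity.
Qed.

Lemma rel_LR l r z : L l -> R r -> rel (l ** z) (z ** r).
Proof. intros. exists l, r. split; [apply good_gen; auto|gsimpl; reflexivity]. Qed.

Lemma rel_RiLi l r z : L l -> R r -> rel (z ** inv r) (inv l ** z).
Proof. intros. exists l, r. split; [apply good_gen; auto|gsimpl; reflexivity]. Qed.

Lemma reach_rel x y : reach G L R x y -> rel x y.
Proof.
  induction 1.
  - apply arc_rel; auto.
  - apply rel_refl.
  - eapply rel_trans; eauto.
Qed.

Lemma arc_pres_rel (T : G -> G) : (forall x y, arc G L R x y -> arc G L R (T x) (T y)) ->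
  forall x y, rel x y -> rel (T x) (T y).
Proof.
  intros HT x y H. apply reach_rel. apply sc_rel in H. destruct H as [H _].
  induction H.
  - apply rt_step; auto.
  - apply rt_refl.
  - eapply rt_trans; eauto.
Qed.

Lemma gen_mulc (S : G -> Prop) x y : gen G S x -> gen G S y -> gen G S (x ** y).
Proof.
  induction 1; intros Hy.
  - rewrite mul1l; auto.
  - rewrite <- mulA. apply gen_mul; auto.
  - rewrite <- mulA. apply gen_mulV; auto.
Qed.

Lemma dcoset_closed x y : dcoset G L R s x -> strongly_connected G L R x y -> dcoset G L R s y.
Proof.
  intros [a [b [Ha [Hb ->]]]] Hs. apply sc_rel in Hs.
  destruct Hs as [u [v [[n H] ->]]].
  assert (HH : gen G L (inv u ** a) /\ gen G R (b ** v)).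
  { clear -H Ha Hb. revert a b Ha Hb. induction H; intros a b Ha Hb.
    - rewrite inv1, mul1l, mul1r. auto.
    - rewrite invM, <- mulA.
      destruct (IHpw (inv l ** a) (b ** r)) as [K1 K2].
      + apply gen_mulV; auto.
      + apply gen_mulc; auto. rewrite <- (mul1r r). constructor; auto. constructor.
      + split; [exact K1| rewrite mulA; exact K2]. }
  destruct HH as [H1 H2].
  exists (inv u ** a), (b ** v). split; [|split]; auto. gsimpl; reflexivity.
Qed.

Definition ps n := Nat.iter n (gmul l0) s.

Lemma iter_cancel (f g : G -> G) d x : (forall y, g (f y) = y) -> Nat.iter d g (Nat.iter d f x) = x.
Proof.
  intro H. induction d; auto.
  rewrite Nat.iter_succ_r, Nat.iter_succ, H. auto.
Qed.

Lemma iter_rel (f : G -> G) d x y : (forall x y, rel x y -> rel (f x) (f y)) ->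
  rel x y -> rel (Nat.iter d f x) (Nat.iter d f y).
Proof. intros Hf H. induction d; simpl; auto. Qed.

Lemma TL0 x y : rel x y -> rel (l0 ** x) (l0 ** y).
Proof. apply TL; auto. Qed.
Lemma TL0i x y : rel x y -> rel (inv l0 ** x) (inv l0 ** y).
Proof. apply TLi; auto. Qed.

Lemma wl_Lrel n w x : word_len G L n w -> rel (w ** x) (Nat.iter n (gmul l0) x).
Proof.
  induction 1.
  - rewrite mul1l. apply rel_refl.
  - rewrite Nat.iter_succ, <- mulA. eapply rel_trans; [apply (rel_LL p l0); auto|].
    apply TL0; auto.
Qed.

Lemma wl_Lirel n w x : word_len G (invset G L) n w -> rel (w ** x) (Nat.iter n (gmul (inv l0)) x).
Proof.
  induction 1.
  - rewrite mul1l. apply rel_refl.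
  - rewrite Nat.iter_succ, <- mulA. unfold invset in H.
    eapply rel_trans; [|apply TL0i; eauto].
    rewrite <- (invK p) at 1. apply rel_LiLi; auto.
Qed.

Definition powL d := Nat.iter d (gmul l0) 1.
Lemma powL_wl d : word_len G L d (powL d).
Proof. induction d; simpl; constructor; auto. Qed.
Lemma powL_mul d x : powL d ** x = Nat.iter d (gmul l0) x.
Proof. induction d; simpl. apply mul1l. rewrite <- mulA, IHd. auto. Qed.

Lemma conn_P n : conn_len G L R s n -> rel (ps n) s.
Proof.
  intros [_ [w [[Hw|Hw] Hs]]]; apply sc_rel in Hs.
  - eapply rel_trans; [apply rel_sym, wl_Lrel; eauto|auto].
  - pose proof (wl_Lirel _ _ s Hw) as H1.
    assert (H2 : rel (Nat.iter n (gmul (inv l0)) s) s).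
    { eapply rel_trans; [apply rel_sym; eauto|auto]. }
    apply (iter_rel (gmul l0) n) in H2; [|apply TL0].
    rewrite iter_cancel in H2; [|intro; apply mulKV]. apply rel_sym. auto.
Qed.

Lemma P_conn n : 0 < n -> rel (ps n) s -> conn_len G L R s n.
Proof.
  intros Hn H. split; auto. exists (powL n). split.
  - left. apply powL_wl.
  - apply sc_rel. rewrite powL_mul. auto.
Qed.

Lemma ps_diff i d : rel (ps i) (ps (i + d)) -> rel s (ps d).
Proof.
  intro H. unfold ps in H. rewrite Nat.iter_add in H.
  apply (iter_rel (gmul (inv l0)) i) in H; [|apply TL0i].
  rewrite !iter_cancel in H; auto; intro; apply mulK.
Qed.

Lemma ps_dcoset i : dcoset G L R s (ps i).
Proof.
  exists (powL i), 1. split; [|split].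
  - induction i; simpl. constructor. constructor; auto.
  - constructor.
  - rewrite mul1r, powL_mul. auto.
Qed.

Section Fin.
Variable k' : nat.
Hypothesis HPk : rel (ps (S k')) s.

Lemma ps_shift j : rel (ps j) (ps (j + S k')).
Proof. unfold ps. rewrite Nat.iter_add. apply iter_rel; [apply TL0|]. apply rel_sym; auto. Qed.

Lemma Li_ps j : rel (inv l0 ** ps j) (ps (j + k')).
Proof.
  eapply rel_trans; [apply TL0i, ps_shift|]. rewrite Nat.add_succ_r.
  unfold ps at 1. rewrite Nat.iter_succ, mulK. apply rel_refl.
Qed.

Definition Q x := exists j, rel x (ps j).

Lemma Q_L l x : L l -> Q x -> Q (l ** x).
Proof.
  intros Hl [j Hj]. exists (S j). eapply rel_trans; [apply TL; eauto|].
  apply rel_LL; auto.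
Qed.
Lemma Q_Li l x : L l -> Q x -> Q (inv l ** x).
Proof.
  intros Hl [j Hj]. exists (j + k'). eapply rel_trans; [apply TLi; eauto|].
  eapply rel_trans; [apply (rel_LiLi l l0); auto|]. apply Li_ps.
Qed.
Lemma Q_R r x : R r -> Q x -> Q (x ** r).
Proof.
  intros Hr [j Hj]. exists (S j). eapply rel_trans; [apply TR; eauto|].
  apply rel_sym. apply rel_LR; auto.
Qed.
Lemma Q_Ri r x : R r -> Q x -> Q (x ** inv r).
Proof.
  intros Hr [j Hj]. exists (j + k'). eapply rel_trans; [apply TRi; eauto|].
  eapply rel_trans; [apply (rel_RiLi l0 r); auto|]. apply Li_ps.
Qed.

Lemma Q_genL a y : gen G L a -> Q y -> Q (a ** y).
Proof.
  induction 1; intro Hy.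
  - rewrite mul1l; auto.
  - rewrite <- mulA. apply Q_L; auto.
  - rewrite <- mulA. apply Q_Li; auto.
Qed.

Lemma Q_genR b : gen G R b -> forall y, Q y -> Q (y ** b).
Proof.
  induction 1; intros y Hy.
  - rewrite mul1r; auto.
  - rewrite mulA. apply IHgen. apply Q_R; auto.
  - rewrite mulA. apply IHgen. apply Q_Ri; auto.
Qed.

Lemma reduce j : exists i, i < S k' /\ rel (ps j) (ps i).
Proof.
  induction j as [j IH] using (well_founded_induction lt_wf).
  destruct (lt_dec j (S k')) as [Hj|Hj].
  - exists j. split; auto. apply rel_refl.
  - destruct (IH (j - S k')) as [i [Hi Hr]]; [lia|].
    exists i. split; auto. eapply rel_trans; [|exact Hr].
    replace j with (j - S k' + S k') at 1 by lia. apply rel_sym, ps_shift.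
Qed.

Lemma cover x : dcoset G L R s x -> exists i, i < S k' /\ strongly_connected G L R (ps i) x.
Proof.
  intros [a [b [Ha [Hb ->]]]].
  assert (HQ : Q (a ** s ** b)).
  { rewrite <- mulA. apply Q_genL; auto. apply Q_genR; auto. exists 0. apply rel_refl. }
  destruct HQ as [j Hj]. destruct (reduce j) as [i [Hi Hr]].
  exists i. split; auto. apply sc_rel. apply rel_sym. eapply rel_trans; eauto.
Qed.
End Fin.

Lemma distinct k i j : (forall n, conn_len G L R s n -> k <= n) -> i < k -> j < k ->
  rel (ps i) (ps j) -> i = j.
Proof.
  intros Hmin Hi Hj H.
  destruct (lt_eq_lt_dec i j) as [[Hij|Hij]|Hij]; auto.
  - replace j with (i + (j - i)) in H by lia. apply ps_diff, rel_sym in H.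
    apply P_conn in H; [|lia]. apply Hmin in H. lia.
  - apply rel_sym in H. replace i with (j + (i - j)) in H by lia. apply ps_diff, rel_sym in H.
    apply P_conn in H; [|lia]. apply Hmin in H. lia.
Qed.

Lemma distinct_inf n i j : conn_len_infinite G L R s -> i < n -> j < n ->
  rel (ps i) (ps j) -> i = j.
Proof.
  intros Hinf Hi Hj H.
  destruct (lt_eq_lt_dec i j) as [[Hij|Hij]|Hij]; auto.
  - replace j with (i + (j - i)) in H by lia. apply ps_diff, rel_sym in H.
    apply P_conn in H; [|lia]. exfalso; eapply Hinf; eauto.
  - apply rel_sym in H. replace i with (j + (i - j)) in H by lia. apply ps_diff, rel_sym in H.
    apply P_conn in H; [|lia]. exfalso; eapply Hinf; eauto.
Qed.

Lemma equip_gen a b (T T' : G -> G) : (forall x, T' (T x) = x) -> (forall x, T (T' x) = x) ->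
  (forall x y, rel x y -> rel (T x) (T y)) -> (forall x y, rel x y -> rel (T' x) (T' y)) ->
  rel (T a) b -> equipotent G (scc G L R a) (scc G L R b).
Proof.
  intros H1 H2 HT HT' Hab.
  assert (F1 : forall x, scc G L R a x -> scc G L R b (T x)).
  { unfold scc; intros x Hx. apply sc_rel in Hx. apply sc_rel.
    eapply rel_trans; [apply rel_sym, Hab|]. apply HT; auto. }
  assert (F2 : forall y, scc G L R b y -> scc G L R a (T' y)).
  { unfold scc; intros y Hy. apply sc_rel in Hy. apply sc_rel.
    rewrite <- (H1 a). apply HT'. eapply rel_trans; eauto. }
  exists (fun u => exist _ (T (proj1_sig u)) (F1 _ (proj2_sig u))),
         (fun v => exist _ (T' (proj1_sig v)) (F2 _ (proj2_sig v))).
  split; intros [x Hx]; simpl.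
  - generalize (F2 (T x) (F1 x Hx)). rewrite H1. intro. f_equal. apply proof_irrelevance.
  - generalize (F1 (T' x) (F2 x Hx)). rewrite H2. intro. f_equal. apply proof_irrelevance.
Qed.

Lemma iso_gen a b (T T' : G -> G) : (forall x, T' (T x) = x) -> (forall x, T (T' x) = x) ->
  (forall x y, arc G L R x y <-> arc G L R (T x) (T y)) ->
  rel (T a) b -> digraph_iso G L R (scc G L R a) (scc G L R b).
Proof.
  intros H1 H2 HA Hab.
  assert (HT : forall x y, rel x y -> rel (T x) (T y)).
  { apply arc_pres_rel. intros; apply (proj1 (HA _ _)); auto. }
  assert (HT' : forall x y, rel x y -> rel (T' x) (T' y)).
  { apply arc_pres_rel. intros x y H. apply (proj2 (HA _ _)). rewrite !H2. auto. }
  assert (F1 : forall x, scc G L R a x -> scc G L R b (T x)).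
  { unfold scc; intros x Hx. apply sc_rel in Hx. apply sc_rel.
    eapply rel_trans; [apply rel_sym, Hab|]. apply HT; auto. }
  assert (F2 : forall y, scc G L R b y -> scc G L R a (T' y)).
  { unfold scc; intros y Hy. apply sc_rel in Hy. apply sc_rel.
    rewrite <- (H1 a). apply HT'. eapply rel_trans; eauto. }
  exists (fun u => exist _ (T (proj1_sig u)) (F1 _ (proj2_sig u))),
         (fun v => exist _ (T' (proj1_sig v)) (F2 _ (proj2_sig v))).
  split; [|split].
  - intros [x Hx]; simpl.
    generalize (F2 (T x) (F1 x Hx)). rewrite H1. intro. f_equal. apply proof_irrelevance.
  - intros [x Hx]; simpl.
    generalize (F1 (T' x) (F2 x Hx)). rewrite H2. intro. f_equal. apply proof_irrelevance.
  - intros [x Hx] [y Hy]; simpl. apply HA.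
Qed.

Lemma equip_sym A B : equipotent G A B -> equipotent G B A.
Proof. intros [f [f' [H1 H2]]]. exists f', f. auto. Qed.

Lemma iso_sym A B : digraph_iso G L R A B -> digraph_iso G L R B A.
Proof.
  intros [f [f' [H1 [H2 H3]]]]. exists f', f. split; [|split]; auto.
  intros u v. rewrite (H3 (f' u) (f' v)), !H2. tauto.
Qed.

Lemma iter_arc (T : G -> G) d : (forall x y, arc G L R x y <-> arc G L R (T x) (T y)) ->
  forall x y, arc G L R x y <-> arc G L R (Nat.iter d T x) (Nat.iter d T y).
Proof.
  intros HT x y. induction d; simpl; [tauto|]. rewrite <- HT. auto.
Qed.

Lemma equip_ps i j : equipotent G (scc G L R (ps i)) (scc G L R (ps j)).
Proof.
  assert (Hle : forall i j, i <= j -> equipotent G (scc G L R (ps i)) (scc G L R (ps j))).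
  { clear i j. intros i j Hij.
    apply (equip_gen _ _ (Nat.iter (j - i) (gmul l0)) (Nat.iter (j - i) (gmul (inv l0)))).
    - intro; apply iter_cancel; intro; apply mulK.
    - intro; apply iter_cancel; intro; apply mulKV.
    - intros; apply iter_rel; auto; apply TL0.
    - intros; apply iter_rel; auto; apply TL0i.
    - unfold ps. rewrite <- Nat.iter_add. replace (j - i + i) with j by lia. apply rel_refl. }
  destruct (le_ge_dec i j); [apply Hle; auto|apply equip_sym, Hle; auto].
Qed.

Lemma iso_L g : L g -> normalizer G L g -> forall i j,
  digraph_iso G L R (scc G L R (ps i)) (scc G L R (ps j)).
Proof.
  intros Hg [N1 N2].
  set (T := fun x => inv g ** x).
  assert (HA : forall x y, arc G L R x y <-> arc G L R (T x) (T y)).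
  { intros x y; unfold T; split.
    - intros [l [r [Hl [Hr ->]]]]. exists (inv g ** l ** g), r. split; [|split]; auto.
      gsimpl; reflexivity.
    - intros [q [r [Hq [Hr Hy]]]]. destruct (N2 q Hq) as [p [Hp ->]].
      exists p, r. split; [|split]; auto.
      rewrite <- (mulKV g y), Hy. gsimpl; reflexivity. }
  assert (HTr : forall x y, rel x y -> rel (T x) (T y)).
  { apply arc_pres_rel. intros; apply (proj1 (HA _ _)); auto. }
  assert (Hd : forall d j, rel (Nat.iter d T (ps (d + j))) (ps j)).
  { intros d j. induction d; [apply rel_refl|].
    rewrite Nat.add_succ_l, Nat.iter_succ_r.
    eapply rel_trans; [|exact IHd]. apply iter_rel; auto.
    unfold T. eapply rel_trans; [apply (rel_LiLi g l0); auto|]. unfold ps at 1.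
    rewrite Nat.iter_succ, mulK. apply rel_refl. }
  assert (Hge : forall i j, j <= i -> digraph_iso G L R (scc G L R (ps i)) (scc G L R (ps j))).
  { intros i j Hij. apply (iso_gen _ _ (Nat.iter (i - j) T) (Nat.iter (i - j) (gmul g))).
    - intro; apply iter_cancel; intro; apply mulKV.
    - intro; apply iter_cancel; intro; apply mulK.
    - apply iter_arc; auto.
    - replace i with (i - j + j) at 2 by lia. apply Hd. }
  intros i j. destruct (le_ge_dec j i); [apply Hge; auto|apply iso_sym, Hge; auto].
Qed.

Lemma iso_R g : R g -> normalizer G R g -> forall i j,
  digraph_iso G L R (scc G L R (ps i)) (scc G L R (ps j)).
Proof.
  intros Hg [N1 N2].
  set (T := fun x => x ** g).
  assert (HA : forall x y, arc G L R x y <-> arc G L R (T x) (T y)).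
  { intros x y; unfold T; split.
    - intros [l [r [Hl [Hr ->]]]]. exists l, (inv g ** r ** g). split; [|split]; auto.
      gsimpl; reflexivity.
    - intros [l [q [Hl [Hq Hy]]]]. destruct (N2 q Hq) as [p [Hp ->]].
      exists l, p. split; [|split]; auto.
      rewrite <- (mulKr g y), Hy. gsimpl; reflexivity. }
  assert (HTr : forall x y, rel x y -> rel (T x) (T y)).
  { apply arc_pres_rel. intros; apply (proj1 (HA _ _)); auto. }
  assert (Hd : forall d j, rel (Nat.iter d T (ps j)) (ps (d + j))).
  { intros d j. induction d; simpl; [apply rel_refl|].
    eapply rel_trans; [apply HTr; exact IHd|]. unfold T. apply rel_sym. apply rel_LR; auto. }
  assert (Hle : forall i j, i <= j -> digraph_iso G L R (scc G L R (ps i)) (scc G L R (ps j))).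
  { intros i j Hij. apply (iso_gen _ _ (Nat.iter (j - i) T) (Nat.iter (j - i) (fun x => x ** inv g))).
    - intro; apply iter_cancel; intro; apply mulKr.
    - intro; apply iter_cancel; intro; apply mulKVr.
    - apply iter_arc; auto.
    - replace j with (j - i + i) at 2 by lia. apply Hd. }
  intros i j. destruct (le_ge_dec i j); [apply Hle; auto|apply iso_sym, Hle; auto].
Qed.

Lemma main_sec :
  (forall k, min_conn_len G L R s k ->
     exists f : nat -> G,
       (forall i, i < k -> dcoset G L R s (f i)) /\
       (forall i j, i < k -> j < k -> strongly_connected G L R (f i) (f j) -> i = j) /\
       (forall x, dcoset G L R s x -> exists i, i < k /\ strongly_connected G L R (f i) x) /\
       (forall i j, i < k -> j < k -> equipotent G (scc G L R (f i)) (scc G L R (f j))) /\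
       ((exists l, L l /\ normalizer G L l) \/ (exists r, R r /\ normalizer G R r) ->
        forall i j, i < k -> j < k ->
          digraph_iso G L R (scc G L R (f i)) (scc G L R (f j)))) /\
  (conn_len_infinite G L R s ->
     forall n, exists f : nat -> G,
       (forall i, i < n -> dcoset G L R s (f i)) /\
       (forall i j, i < n -> j < n -> strongly_connected G L R (f i) (f j) -> i = j)).
Proof.
  split.
  - intros k [Hk Hmin]. exists ps.
    assert (HP := conn_P _ Hk). destruct Hk as [Hk0 _].
    destruct k as [|k']; [lia|].
    split; [|split; [|split; [|split]]].
    + intros; apply ps_dcoset.
    + intros i j Hi Hj H. apply sc_rel in H. eapply distinct; eauto.
    + intros x Hx. eapply cover; eauto.
    + intros; apply equip_ps.
    + intros [[g [Hg Hn]]|[g [Hg Hn]]] i j _ _.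
      * apply (iso_L g); auto.
      * apply (iso_R g); auto.
  - intros Hinf n. exists ps. split.
    + intros; apply ps_dcoset.
    + intros i j Hi Hj H. apply sc_rel in H. eapply distinct_inf; eauto.
Qed.
End Grp.

Theorem mainTheorem17 (G : group) (L R : G -> Prop) (s : G)
  (hL : exists l, L l) (hR : exists r, R r)
  (hWL : is_subgroup G (Wd G L)) (hWR : is_subgroup G (Wd G R)) :
  (* the double coset is a union of strongly connected components *)
  (forall x y, dcoset G L R s x -> strongly_connected G L R x y -> dcoset G L R s y) /\
  (* k_s finite: exactly k_s components, equal cardinality; isomorphic under the normalizer hypothesis *)
  (forall k, min_conn_len G L R s k ->
     exists f : nat -> G,
       (forall i, i < k -> dcoset G L R s (f i)) /\
       (forall i j, i < k -> j < k -> strongly_connected G L R (f i) (f j) -> i = j) /\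
       (forall x, dcoset G L R s x -> exists i, i < k /\ strongly_connected G L R (f i) x) /\
       (forall i j, i < k -> j < k -> equipotent G (scc G L R (f i)) (scc G L R (f j))) /\
       ((exists l, L l /\ normalizer G L l) \/ (exists r, R r /\ normalizer G R r) ->
        forall i j, i < k -> j < k ->
          digraph_iso G L R (scc G L R (f i)) (scc G L R (f j)))) /\
  (* k_s infinite: infinitely many components *)
  (conn_len_infinite G L R s ->
     forall n, exists f : nat -> G,
       (forall i, i < n -> dcoset G L R s (f i)) /\
       (forall i j, i < n -> j < n -> strongly_connected G L R (f i) (f j) -> i = j)).
Proof.
  destruct hL as [l0 Hl0]. destruct hR as [r0 Hr0].
  split.
  - intros x y. eapply dcoset_closed; eauto.
  - eapply main_sec; eauto.
Qed.
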